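(* Let $M=\frac32-\sqrt2$ and for $\xi\in[0,1]$ define $$G_\xi(w,f)=(1-f)\,y\left(\tfrac12-y\right)+4M\xi\cdot\frac{w}{1-f},\qquad y=1-\frac{w}{1-f}.$$ Let $\kappa=\frac{1038}{1000}$. For all $w_1,w_2,w_3\in[0,\frac12]$ and $f_1,f_2,f_3\in[\frac1{13},\frac12]$ such that $\frac{1-f_i}{2}\le w_i\le 1-f_i$ for $i=1,2,3$, and for every $\xi\in[0,1]$, $$\tfrac12\bigl(G_\xi(w_1,f_1)+G_\xi(w_2,f_2)\bigr)\le\kappa\cdot G_\xi\!\left(\tfrac{w_1+w_2}{2},\tfrac{f_1+f_2}{2}\right),$$ $$\tfrac13\bigl(G_\xi(w_1,f_1)+G_\xi(w_2,f_2)+G_\xi(w_3,f_3)\bigr)\le\kappa\cdot G_\xi\!\left(\tfrac{w_1+w_2+w_3}{3},\tfrac{f_1+f_2+f_3}{3}\right).$$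
   Context: Here $(1-f)y(\frac12-y)$ with $y=1-\frac{w}{1-f}$ is the quantity $\frac{1-f}{\Phi(1-\frac w{1-f})}$ for the potential $\Phi(x)=\frac{1}{x(\frac12-x)}$; the constant $M=\frac32-\sqrt2$ equals $\sup_{0\le x\le 1/2}\frac{x(\frac12-x)}{1-x}$. *)

(* Defs.v *)
From Stdlib Require Import Reals.
Open Scope R_scope.

Definition Mconst : R := 3/2 - sqrt 2.

Definition Gxi (xi w f : R) : R :=
  let y := 1 - w / (1 - f) in
  (1 - f) * y * (1/2 - y) + 4 * Mconst * xi * (w / (1 - f)).

Definition kappa : R := 1038 / 1000.

(* Main.v *)
Require Import Defs.
From Stdlib Require Import Reals Lra Psatz.
Open Scope R_scope.

Definition g (t : R) : R := (1 - t) * (t - 1/2).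

Lemma pair_b x y : 1/2 <= x <= 12/13 -> 1/2 <= y <= 12/13 ->
  (x-y)^2 <= 3/10 * (x+y)*x*y.
Proof. intros.
assert (0 <= (x-1/2)*(y-1/2)) by nra.
assert (0 <= (12/13-x)*(12/13-y)) by nra.
assert (0 <= (x-1/2)*(12/13-y)) by nra.
assert (0 <= (12/13-x)*(y-1/2)) by nra.
nra. Qed.

Lemma poly2 u1 u2 : 1/2 <= u1 <= 12/13 -> 1/2 <= u2 <= 12/13 ->
  3432/10000 * (u1-u2)^2 <= 4 * (1038/1000) * (38/1000) * (u1+u2) * u1 * u2.
Proof. intros. nra. Qed.

Lemma poly3 u1 u2 u3 : 1/2 <= u1 <= 12/13 -> 1/2 <= u2 <= 12/13 -> 1/2 <= u3 <= 12/13 ->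
  3432/10000 * ((u1+u2+u3-3*u1)^2*u2*u3 + (u1+u2+u3-3*u2)^2*u1*u3 + (u1+u2+u3-3*u3)^2*u1*u2)
   <= 6 * (1038/1000) * (38/1000) * (u1+u2+u3)^2 * u1 * u2 * u3.
Proof. intros.
assert (E: (u1+u2+u3-3*u1)^2*u2*u3 + (u1+u2+u3-3*u2)^2*u1*u3 + (u1+u2+u3-3*u3)^2*u1*u2
  = (u1+u2+u3) * ((u1-u2)^2*u3 + (u1-u3)^2*u2 + (u2-u3)^2*u1)) by ring.
rewrite E.
pose proof (pair_b u1 u2 H H0). pose proof (pair_b u1 u3 H H1). pose proof (pair_b u2 u3 H0 H1).
assert (A: (u1-u2)^2*u3 + (u1-u3)^2*u2 + (u2-u3)^2*u1 <= 3/10*2*(u1+u2+u3)*u1*u2*u3).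
{ assert ((u1-u2)^2*u3 <= 3/10 * (u1+u2)*u1*u2*u3) by (apply (Rmult_le_compat_r u3) in H2; lra).
  assert ((u1-u3)^2*u2 <= 3/10 * (u1+u3)*u1*u3*u2) by (apply (Rmult_le_compat_r u2) in H3; lra).
  assert ((u2-u3)^2*u1 <= 3/10 * (u2+u3)*u2*u3*u1) by (apply (Rmult_le_compat_r u1) in H4; lra).
  nra. }
assert (0 < u1*u2*u3) by (apply Rmult_lt_0_compat; [apply Rmult_lt_0_compat|]; lra).
assert (0 < u1+u2+u3) by lra.
apply Rmult_le_compat_l with (r := u1+u2+u3) in A; [|lra].
nra.
Qed.

Lemma amgm a b x : 0 < a -> 0 <= a * x^2 - b * x + b^2 / (4*a).
Proof. intros Ha.
assert (E: a * x^2 - b * x + b^2 / (4*a) = (2*a*x - b)^2 / (4*a)) by (field; lra).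
rewrite E. apply Rmult_le_pos; [apply pow2_ge_0|]. left; apply Rinv_0_lt_compat; lra. Qed.

Lemma tb u w : 0 < u -> u/2 <= w <= u -> 1/2 <= w/u <= 1.
Proof. intros. assert (w = (w/u)*u) by (field; lra). set (t := w/u) in *. nra. Qed.

Lemma core3 u1 u2 u3 t1 t2 t3 T c :
  1/2 <= u1 <= 12/13 -> 1/2 <= u2 <= 12/13 -> 1/2 <= u3 <= 12/13 ->
  1/2 <= t1 <= 1 -> 1/2 <= t2 <= 1 -> 1/2 <= t3 <= 1 -> 1/2 <= T ->
  (u1+u2+u3) * T = u1*t1 + u2*t2 + u3*t3 ->
  0 <= c <= 3432/10000 ->
  (1/3)*((u1*g t1 + c*t1) + (u2*g t2 + c*t2) + (u3*g t3 + c*t3))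
    <= kappa * ((u1+u2+u3)/3 * g T + c*T).
Proof.
intros Hu1 Hu2 Hu3 Ht1 Ht2 Ht3 HT HS Hc. unfold kappa, g.
set (S := u1+u2+u3) in *.
set (k := 1038/1000).
set (s1 := t1 - T). set (s2 := t2 - T). set (s3 := t3 - T).
set (p1 := S - 3*u1). set (p2 := S - 3*u2). set (p3 := S - 3*u3).
assert (HS0 : 0 < S) by (unfold S; lra).
assert (Hsum : u1*s1 + u2*s2 + u3*s3 = 0).
{ assert (u1*s1 + u2*s2 + u3*s3 = (u1*t1+u2*t2+u3*t3) - S*T) by (unfold s1,s2,s3,S; ring). lra. }
assert (Hps : p1*s1 + p2*s2 + p3*s3 = S*(s1+s2+s3)).
{ assert (p1*s1 + p2*s2 + p3*s3 = S*(s1+s2+s3) - 3*(u1*s1+u2*s2+u3*s3)) by (unfold p1,p2,p3; ring). lra. }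
pose proof (amgm (k*S*u1) (c*p1) s1 ltac:(unfold k; nra)) as A1.
pose proof (amgm (k*S*u2) (c*p2) s2 ltac:(unfold k; nra)) as A2.
pose proof (amgm (k*S*u3) (c*p3) s3 ltac:(unfold k; nra)) as A3.
set (Q := (c*p1)^2/(4*(k*S*u1)) + (c*p2)^2/(4*(k*S*u2)) + (c*p3)^2/(4*(k*S*u3))).
assert (HU : 0 < u1*u2*u3) by (apply Rmult_lt_0_compat; [apply Rmult_lt_0_compat|]; lra).
assert (EQ : Q * (4*k*S*(u1*u2*u3)) = c^2 * (p1^2*u2*u3 + p2^2*u1*u3 + p3^2*u1*u2)).
{ unfold Q, k. field. repeat split; lra. }
pose proof (poly3 u1 u2 u3 Hu1 Hu2 Hu3) as P.
fold S in P. fold p1 p2 p3 in P.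
assert (Pp : 0 <= p1^2*u2*u3 + p2^2*u1*u3 + p3^2*u1*u2).
{ assert (0 <= p1^2*u2*u3) by (apply Rmult_le_pos; [apply Rmult_le_pos|]; [apply pow2_ge_0|lra|lra]).
  assert (0 <= p2^2*u1*u3) by (apply Rmult_le_pos; [apply Rmult_le_pos|]; [apply pow2_ge_0|lra|lra]).
  assert (0 <= p3^2*u1*u2) by (apply Rmult_le_pos; [apply Rmult_le_pos|]; [apply pow2_ge_0|lra|lra]).
  lra. }
assert (HQ1 : Q * (4*k*S*(u1*u2*u3)) <= c * (6*k*(38/1000)*S^2*(u1*u2*u3))).
{ rewrite EQ. unfold k in *.
  set (X := p1^2*u2*u3 + p2^2*u1*u3 + p3^2*u1*u2) in *.
  assert (c*c*X <= c*(3432/10000)*X) by (apply Rmult_le_compat_r; [lra|apply Rmult_le_compat_l; lra]).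
  assert (c*(3432/10000*X) <= c*(6*(1038/1000)*(38/1000)*S^2*u1*u2*u3)) by (apply Rmult_le_compat_l; lra).
  replace (c^2*X) with (c*c*X) by ring.
  replace (c * (6 * (1038/1000) * (38/1000) * S ^ 2 * (u1 * u2 * u3))) with (c*(6*(1038/1000)*(38/1000)*S^2*u1*u2*u3)) by ring.
  lra. }
assert (HQ : Q <= 3/2*(k-1)*c*S).
{ apply Rmult_le_reg_r with (r := 4*k*S*(u1*u2*u3)).
  - unfold k; nra.
  - replace (3/2*(k-1)*c*S * (4*k*S*(u1*u2*u3))) with (c * (6*k*(38/1000)*S^2*(u1*u2*u3))) by (unfold k; field).
    exact HQ1. }
assert (Hmain : 0 <= S * (k*(u1*s1^2+u2*s2^2+u3*s3^2) - c*(s1+s2+s3) + 3/2*(k-1)*c)).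
{ unfold Q in HQ. nra. }
assert (Hm2 : 0 <= k*(u1*s1^2+u2*s2^2+u3*s3^2) - c*(s1+s2+s3) + 3/2*(k-1)*c).
{ apply (Rmult_le_reg_l S); [lra|]. lra. }
assert (G1 : 0 <= (1-t1)*(t1-1/2)) by nra.
assert (G2 : 0 <= (1-t2)*(t2-1/2)) by nra.
assert (G3 : 0 <= (1-t3)*(t3-1/2)) by nra.
assert (ID : 3*(k*(S/3*((1-T)*(T-1/2)) + c*T)) - ((u1*((1-t1)*(t1-1/2)) + c*t1) + (u2*((1-t2)*(t2-1/2)) + c*t2) + (u3*((1-t3)*(t3-1/2)) + c*t3))
  = (k-1)*(u1*((1-t1)*(t1-1/2)) + u2*((1-t2)*(t2-1/2)) + u3*((1-t3)*(t3-1/2)))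
    + (k*(u1*s1^2+u2*s2^2+u3*s3^2) - c*(s1+s2+s3) + 3/2*(k-1)*c) + 3*(k-1)*c*(T-1/2)
    + k*(3/2 - 2*T)*(S*T - (u1*t1+u2*t2+u3*t3))).
{ unfold s1, s2, s3, S. field. }
rewrite HS, Rminus_diag, Rmult_0_r, Rplus_0_r in ID.
assert (0 <= (k-1)*(u1*((1-t1)*(t1-1/2)) + u2*((1-t2)*(t2-1/2)) + u3*((1-t3)*(t3-1/2)))) by (unfold k; nra).
assert (0 <= 3*(k-1)*c*(T-1/2)) by (unfold k; nra).
lra.
Qed.

Lemma core2 u1 u2 t1 t2 T c :
  1/2 <= u1 <= 12/13 -> 1/2 <= u2 <= 12/13 ->
  1/2 <= t1 <= 1 -> 1/2 <= t2 <= 1 -> 1/2 <= T ->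
  (u1+u2) * T = u1*t1 + u2*t2 ->
  0 <= c <= 3432/10000 ->
  (1/2)*((u1*g t1 + c*t1) + (u2*g t2 + c*t2))
    <= kappa * ((u1+u2)/2 * g T + c*T).
Proof.
intros Hu1 Hu2 Ht1 Ht2 HT HS Hc. unfold kappa, g.
set (S := u1+u2) in *.
set (k := 1038/1000).
set (s1 := t1 - T). set (s2 := t2 - T).
set (p1 := S - 2*u1). set (p2 := S - 2*u2).
assert (HS0 : 0 < S) by (unfold S; lra).
assert (Hsum : u1*s1 + u2*s2 = 0).
{ assert (u1*s1 + u2*s2 = (u1*t1+u2*t2) - S*T) by (unfold s1,s2,S; ring). lra. }
assert (Hps : p1*s1 + p2*s2 = S*(s1+s2)).
{ assert (p1*s1 + p2*s2 = S*(s1+s2) - 2*(u1*s1+u2*s2)) by (unfold p1,p2; ring). lra. }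
pose proof (amgm (k*S*u1) (c*p1) s1 ltac:(unfold k; nra)) as A1.
pose proof (amgm (k*S*u2) (c*p2) s2 ltac:(unfold k; nra)) as A2.
set (Q := (c*p1)^2/(4*(k*S*u1)) + (c*p2)^2/(4*(k*S*u2))).
assert (HU : 0 < u1*u2) by (apply Rmult_lt_0_compat; lra).
assert (EQ : Q * (4*k*S*(u1*u2)) = c^2 * ((u1-u2)^2*S)).
{ unfold Q, k, p1, p2, S. field. repeat split; lra. }
pose proof (poly2 u1 u2 Hu1 Hu2) as P.
fold S in P.
assert (Pp : 0 <= (u1-u2)^2*S) by (apply Rmult_le_pos; [apply pow2_ge_0|lra]).
assert (HQ1 : Q * (4*k*S*(u1*u2)) <= c * (4*k*(38/1000)*S^2*(u1*u2))).
{ rewrite EQ. unfold k in *.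
  set (X := (u1-u2)^2) in *.
  assert (0 <= X) by apply pow2_ge_0.
  assert (c*c*(X*S) <= c*(3432/10000)*(X*S)) by (apply Rmult_le_compat_r; [lra|apply Rmult_le_compat_l; lra]).
  assert (c*(3432/10000*X*S) <= c*(4*(1038/1000)*(38/1000)*S*u1*u2*S)).
  { apply Rmult_le_compat_l; [lra|]. apply Rmult_le_compat_r; lra. }
  replace (c^2*(X*S)) with (c*c*(X*S)) by ring.
  replace (c * (4 * (1038/1000) * (38/1000) * S ^ 2 * (u1 * u2))) with (c*(4*(1038/1000)*(38/1000)*S*u1*u2*S)) by ring.
  replace (c * (3432 / 10000) * (X * S)) with (c * (3432 / 10000 * X * S)) in H0 by ring.
  lra. }
assert (HQ : Q <= (k-1)*c*S).
{ apply Rmult_le_reg_r with (r := 4*k*S*(u1*u2)).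
  - unfold k; nra.
  - replace ((k-1)*c*S * (4*k*S*(u1*u2))) with (c * (4*k*(38/1000)*S^2*(u1*u2))) by (unfold k; field).
    exact HQ1. }
assert (Hmain : 0 <= S * (k*(u1*s1^2+u2*s2^2) - c*(s1+s2) + (k-1)*c)).
{ unfold Q in HQ. nra. }
assert (Hm2 : 0 <= k*(u1*s1^2+u2*s2^2) - c*(s1+s2) + (k-1)*c).
{ apply (Rmult_le_reg_l S); [lra|]. lra. }
assert (ID : 2*(k*(S/2*((1-T)*(T-1/2)) + c*T)) - ((u1*((1-t1)*(t1-1/2)) + c*t1) + (u2*((1-t2)*(t2-1/2)) + c*t2))
  = (k-1)*(u1*((1-t1)*(t1-1/2)) + u2*((1-t2)*(t2-1/2)))
    + (k*(u1*s1^2+u2*s2^2) - c*(s1+s2) + (k-1)*c) + 2*(k-1)*c*(T-1/2)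
    + k*(3/2 - 2*T)*(S*T - (u1*t1+u2*t2))).
{ unfold s1, s2, S. field. }
rewrite HS, Rminus_diag, Rmult_0_r, Rplus_0_r in ID.
assert (0 <= (k-1)*(u1*((1-t1)*(t1-1/2)) + u2*((1-t2)*(t2-1/2)))) by (assert (0 <= (1-t1)*(t1-1/2)) by nra; assert (0 <= (1-t2)*(t2-1/2)) by nra; unfold k; nra).
assert (0 <= 2*(k-1)*c*(T-1/2)) by (unfold k; nra).
lra.
Qed.

Lemma Gxi_eq xi w f : Gxi xi w f = (1-f) * g (w/(1-f)) + (4*Mconst*xi) * (w/(1-f)).
Proof. unfold Gxi, g. cbv zeta. set (t := w/(1-f)). field. Qed.

Lemma c_bounds xi : 0 <= xi <= 1 -> 0 <= 4*Mconst*xi <= 3432/10000.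
Proof. intros Hx. unfold Mconst.
assert (Hs : sqrt 2 * sqrt 2 = 2) by (apply sqrt_sqrt; lra).
assert (Hp : 0 <= sqrt 2) by apply sqrt_pos.
assert (14142/10000 <= sqrt 2) by nra.
assert (sqrt 2 <= 3/2) by nra.
split; nra. Qed.

Lemma Tb2 w1 w2 u1 u2 : 0 < u1 -> 0 < u2 -> u1/2 <= w1 -> u2/2 <= w2 ->
  1/2 <= ((w1+w2)/2)/((u1+u2)/2).
Proof. intros. set (T := ((w1+w2)/2)/((u1+u2)/2)).
assert (w1 + w2 = T*(u1+u2)) by (unfold T; field; lra). nra. Qed.

Lemma Tb3 w1 w2 w3 u1 u2 u3 : 0 < u1 -> 0 < u2 -> 0 < u3 -> u1/2 <= w1 -> u2/2 <= w2 -> u3/2 <= w3 ->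
  1/2 <= ((w1+w2+w3)/3)/((u1+u2+u3)/3).
Proof. intros. set (T := ((w1+w2+w3)/3)/((u1+u2+u3)/3)).
assert (w1 + w2 + w3 = T*(u1+u2+u3)) by (unfold T; field; lra). nra. Qed.

Theorem lemma18 :
  forall (w1 w2 w3 f1 f2 f3 xi : R),
    0 <= w1 <= 1/2 -> 0 <= w2 <= 1/2 -> 0 <= w3 <= 1/2 ->
    1/13 <= f1 <= 1/2 -> 1/13 <= f2 <= 1/2 -> 1/13 <= f3 <= 1/2 ->
    (1 - f1) / 2 <= w1 <= 1 - f1 ->
    (1 - f2) / 2 <= w2 <= 1 - f2 ->
    (1 - f3) / 2 <= w3 <= 1 - f3 ->
    0 <= xi <= 1 ->
    (1/2) * (Gxi xi w1 f1 + Gxi xi w2 f2)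
      <= kappa * Gxi xi ((w1 + w2) / 2) ((f1 + f2) / 2)
    /\
    (1/3) * (Gxi xi w1 f1 + Gxi xi w2 f2 + Gxi xi w3 f3)
      <= kappa * Gxi xi ((w1 + w2 + w3) / 3) ((f1 + f2 + f3) / 3).
Proof.
intros w1 w2 w3 f1 f2 f3 xi Hw1 Hw2 Hw3 Hf1 Hf2 Hf3 H1 H2 H3 Hx.
pose proof (c_bounds xi Hx) as Hc.
rewrite !Gxi_eq.
pose proof (tb (1-f1) w1 ltac:(lra) H1) as T1.
pose proof (tb (1-f2) w2 ltac:(lra) H2) as T2.
pose proof (tb (1-f3) w3 ltac:(lra) H3) as T3.
split.
- replace (1 - (f1+f2)/2) with (((1-f1)+(1-f2))/2) by field.
  apply core2; try lra.
  + apply Tb2; lra.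
  + field. lra.
- replace (1 - (f1+f2+f3)/3) with (((1-f1)+(1-f2)+(1-f3))/3) by field.
  apply core3; try lra.
  + apply Tb3; lra.
  + field. lra.
Qed.
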